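(* Let $H_1,H_2\in\mathcal O$, let $\lambda_1,\dots,\lambda_N$ be the eigenvalues of $H_2$ with corresponding orthonormal eigenvectors $\psi_1,\dots,\psi_N$, and assume: (i) $(H_1\psi_k,\psi_j)\neq0$ for all $k\neq j$; (ii) $\lambda_k-\lambda_l\neq\lambda_{k'}-\lambda_{l'}$ for all ordered pairs $(k,l)\neq(k',l')$ in $\{1,\dots,N\}^2$. Then: if $\mathrm{Tr}(H_1)=\mathrm{Tr}(H_2)=0$, $\mathcal L(H_1,H_2)$ equals the space of all traceless Hermitian operators on $\mathcal H$; otherwise $\mathcal L(H_1,H_2)=\mathcal O$.
   Context: $\mathcal H=\mathbb C^N$, $N>1$, with inner product $(\psi,\psi')=\sum_k\psi_k\bar\psi'_k$. $\mathcal O$ is the real vector space of Hermitian operators on $\mathcal H$, with bracket $\{A,B\}=i(AB-BA)\in\mathcal O$. $\mathcal L(H_1,H_2)$ is the real linear span of $H_1$, $H_2$ and all iterated brackets of them: $\{H_1,H_2\},\{H_1,\{H_1,H_2\}\},\{H_2,\{H_1,H_2\}\},\dots$ (i.e. the smallest real subspace containing $H_1,H_2$ and closed under $\{\cdot,\cdot\}$). *)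

(* Defs.v *)
(* Scalars: an arbitrary numClosedFieldType C (e.g. the
   complex numbers), with conjugation z^* and imaginary unit 'i. *)
From HB Require Import structures.
From mathcomp Require Import all_boot all_order all_algebra.
Set Implicit Arguments. Unset Strict Implicit. Unset Printing Implicit Defensive.
Import Order.TTheory GRing.Theory Num.Theory.
Local Open Scope ring_scope.

Definition inner (C : numClosedFieldType) (N : nat) (u v : 'cV[C]_N) : C :=
  \sum_(k < N) u k ord0 * (v k ord0)^*.

Definition hermitianOp (C : numClosedFieldType) (N : nat) (A : 'M[C]_N) : Prop :=
  forall i j, A j i = (A i j)^*.

Definition bracket (C : numClosedFieldType) (N : nat) (A B : 'M[C]_N) : 'M[C]_N :=
  'i *: (A *m B - B *m A).

(* L(H1,H2): the smallest real subspace containing H1, H2 and closed under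
   the bracket, i.e. the intersection of all such subsets. *)
Definition lie_closure (C : numClosedFieldType) (N : nat) (H1 H2 : 'M[C]_N)
  (X : 'M[C]_N) : Prop :=
  forall S : 'M[C]_N -> Prop,
    S H1 -> S H2 -> S 0 ->
    (forall (a : C) (Y Z : 'M[C]_N), a \is Num.real -> S Y -> S Z -> S (a *: Y + Z)) ->
    (forall Y Z : 'M[C]_N, S Y -> S Z -> S (bracket Y Z)) ->
    S X.

(* Main.v *)
Require Import Defs.
From HB Require Import structures.
From mathcomp Require Import all_boot all_order all_algebra.
From mathcomp Require Import ring.
Set Implicit Arguments. Unset Strict Implicit. Unset Printing Implicit Defensive.
Import Order.TTheory GRing.Theory Num.Theory.
Local Open Scope ring_scope.

Definition ct (C : numClosedFieldType) (N : nat) (X : 'M[C]_N) : 'M[C]_N :=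
  \matrix_(i, j) (X j i)^*.

Lemma ctE (C : numClosedFieldType) (N : nat) (X : 'M[C]_N) i j : ct X i j = (X j i)^*.
Proof. by rewrite mxE. Qed.

Lemma hermE (C : numClosedFieldType) (N : nat) (X : 'M[C]_N) :
  hermitianOp X <-> ct X = X.
Proof.
split=> [h|h i j]; first by apply/matrixP=> i j; rewrite ctE -h.
by rewrite -{1}h ctE.
Qed.

Lemma ctK (C : numClosedFieldType) (N : nat) (X : 'M[C]_N) : ct (ct X) = X.
Proof. by apply/matrixP=> i j; rewrite !ctE conjCK. Qed.

Lemma ctM (C : numClosedFieldType) (N : nat) (X Y : 'M[C]_N) :
  ct (X *m Y) = ct Y *m ct X.
Proof.
apply/matrixP=> i j; rewrite ctE !mxE rmorph_sum; apply: eq_bigr=> k _.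
by rewrite rmorphM /= !ctE mulrC.
Qed.

Lemma ctD (C : numClosedFieldType) (N : nat) (X Y : 'M[C]_N) :
  ct (X + Y) = ct X + ct Y.
Proof. by apply/matrixP=> i j; rewrite !mxE rmorphD. Qed.

Lemma ctN (C : numClosedFieldType) (N : nat) (X : 'M[C]_N) :
  ct (- X) = - ct X.
Proof. by apply/matrixP=> i j; rewrite !mxE rmorphN. Qed.

Lemma ctZ (C : numClosedFieldType) (N : nat) a (X : 'M[C]_N) :
  ct (a *: X) = a^* *: ct X.
Proof. by apply/matrixP=> i j; rewrite !mxE rmorphM. Qed.

Lemma ctdelta (C : numClosedFieldType) (N : nat) (j m : 'I_N) :
  ct (delta_mx j m : 'M[C]_N) = delta_mx m j.
Proof. by apply/matrixP=> a b; rewrite !mxE conjC_nat andbC. Qed.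

Lemma herm_bracket (C : numClosedFieldType) (N : nat) (Y Z : 'M[C]_N) :
  hermitianOp Y -> hermitianOp Z -> hermitianOp (bracket Y Z).
Proof.
move=> /hermE hY /hermE hZ; apply/hermE.
rewrite /bracket ctZ ctD ctN !ctM hY hZ conjCi scaleNr -scalerN opprB //.
Qed.

Lemma herm_lin (C : numClosedFieldType) (N : nat) a (Y Z : 'M[C]_N) :
  a \is Num.real -> hermitianOp Y -> hermitianOp Z -> hermitianOp (a *: Y + Z).
Proof.
move=> ra /hermE hY /hermE hZ; apply/hermE.
by rewrite ctD ctZ hY hZ conj_Creal.
Qed.

Lemma tr_bracket (C : numClosedFieldType) (N : nat) (Y Z : 'M[C]_N) :
  \tr (bracket Y Z) = 0.
Proof. by rewrite /bracket mxtraceZ raddfB /= mxtrace_mulC subrr mulr0. Qed.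

Lemma lc_herm (C : numClosedFieldType) (N : nat) (H1 H2 X : 'M[C]_N) :
  hermitianOp H1 -> hermitianOp H2 -> lie_closure H1 H2 X ->
  hermitianOp X /\ (\tr H1 = 0 -> \tr H2 = 0 -> \tr X = 0).
Proof.
move=> h1 h2 hX; apply: (hX (fun Y => hermitianOp Y /\ (\tr H1 = 0 -> \tr H2 = 0 -> \tr Y = 0))).
- by split=> // ->.
- by split=> // _ ->.
- split; last by rewrite mxtrace0.
  by move=> i j; rewrite !mxE conjC0.
- move=> a Y Z ra [hY tY] [hZ tZ]; split; first exact: herm_lin.
  by move=> t1 t2; rewrite mxtraceD mxtraceZ tY // tZ // mulr0 addr0.
- move=> Y Z [hY _] [hZ _]; split; first exact: herm_bracket.
  by rewrite tr_bracket.
Qed.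

Lemma lcH1 (C : numClosedFieldType) (N : nat) (H1 H2 : 'M[C]_N) : lie_closure H1 H2 H1.
Proof. by move=> S. Qed.
Lemma lcH2 (C : numClosedFieldType) (N : nat) (H1 H2 : 'M[C]_N) : lie_closure H1 H2 H2.
Proof. by move=> S. Qed.
Lemma lc0 (C : numClosedFieldType) (N : nat) (H1 H2 : 'M[C]_N) : lie_closure H1 H2 0.
Proof. by move=> S. Qed.
Lemma lcL (C : numClosedFieldType) (N : nat) (H1 H2 : 'M[C]_N) a Y Z :
  a \is Num.real -> lie_closure H1 H2 Y -> lie_closure H1 H2 Z ->
  lie_closure H1 H2 (a *: Y + Z).
Proof.
move=> ra hY hZ S s1 s2 s0 sl sb.
exact: (sl a Y Z ra (hY S s1 s2 s0 sl sb) (hZ S s1 s2 s0 sl sb)).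
Qed.
Lemma lcB (C : numClosedFieldType) (N : nat) (H1 H2 : 'M[C]_N) Y Z :
  lie_closure H1 H2 Y -> lie_closure H1 H2 Z -> lie_closure H1 H2 (bracket Y Z).
Proof.
move=> hY hZ S s1 s2 s0 sl sb.
exact: (sb Y Z (hY S s1 s2 s0 sl sb) (hZ S s1 s2 s0 sl sb)).
Qed.
Lemma lcD (C : numClosedFieldType) (N : nat) (H1 H2 : 'M[C]_N) Y Z :
  lie_closure H1 H2 Y -> lie_closure H1 H2 Z -> lie_closure H1 H2 (Y + Z).
Proof. by move=> hY hZ; rewrite -[Y]scale1r; apply: lcL; rewrite ?rpred1. Qed.
Lemma lcZ (C : numClosedFieldType) (N : nat) (H1 H2 : 'M[C]_N) a Y :
  a \is Num.real -> lie_closure H1 H2 Y -> lie_closure H1 H2 (a *: Y).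
Proof. by move=> ra hY; rewrite -[_ *: _]addr0; apply: lcL => //; apply: lc0. Qed.
Lemma lcN (C : numClosedFieldType) (N : nat) (H1 H2 : 'M[C]_N) Y :
  lie_closure H1 H2 Y -> lie_closure H1 H2 (- Y).
Proof. by move=> hY; rewrite -scaleN1r; apply: lcZ; rewrite ?rpredN ?rpred1. Qed.
Lemma lcSub (C : numClosedFieldType) (N : nat) (H1 H2 : 'M[C]_N) Y Z :
  lie_closure H1 H2 Y -> lie_closure H1 H2 Z -> lie_closure H1 H2 (Y - Z).
Proof. by move=> hY hZ; apply: lcD => //; apply: lcN. Qed.
Lemma lc_sum (C : numClosedFieldType) (N : nat) (H1 H2 : 'M[C]_N) (I : Type)
  (r : seq I) (P : pred I) (F : I -> 'M[C]_N) :
  (forall i, P i -> lie_closure H1 H2 (F i)) ->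
  lie_closure H1 H2 (\sum_(i <- r | P i) F i).
Proof.
move=> h; apply: (big_ind (fun M => lie_closure H1 H2 M)); first exact: lc0.
  by move=> *; apply: lcD.
exact: h.
Qed.

Lemma lc_map (C : numClosedFieldType) (N : nat) (f : 'M[C]_N -> 'M[C]_N)
  (H1 H2 X : 'M[C]_N) :
  f 0 = 0 -> (forall a Y Z, a \is Num.real -> f (a *: Y + Z) = a *: f Y + f Z) ->
  (forall Y Z, f (bracket Y Z) = bracket (f Y) (f Z)) ->
  lie_closure H1 H2 X -> lie_closure (f H1) (f H2) (f X).
Proof.
move=> f0 fl fb hX S s1 s2 s0 sl sb.
apply: (hX (fun Y => S (f Y))) => //; first by rewrite f0.
  by move=> a Y Z ra hY hZ; rewrite fl //; apply: sl.
by move=> Y Z hY hZ; rewrite fb; apply: sb.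
Qed.

Lemma cmap_props (C : numClosedFieldType) (N : nat) (P Q : 'M[C]_N) :
  P *m Q = 1%:M ->
  let f := fun X => Q *m X *m P in
  [/\ f 0 = 0, (forall a Y Z, f (a *: Y + Z) = a *: f Y + f Z) &
   (forall Y Z, f (bracket Y Z) = bracket (f Y) (f Z))].
Proof.
move=> PQ f; split.
- by rewrite /f mulmx0 mul0mx.
- by move=> a Y Z; rewrite /f mulmxDr mulmxDl -scalemxAr -scalemxAl.
- move=> Y Z; rewrite /f /bracket -!scalemxAr -!scalemxAl; congr (_ *: _).
  rewrite mulmxBr mulmxBl !mulmxA -!(mulmxA _ P) PQ !mulmx1.
  done.
Qed.

Lemma eigen_split (C : numClosedFieldType) (N : nat) (I : eqType)
  (P : 'M[C]_N -> Prop) (T : 'M[C]_N -> 'M[C]_N) (mu : I -> C) :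
  P 0 -> (forall c Y Z, P Y -> P Z -> P (c *: Y + Z)) ->
  (forall Y, P Y -> P (T Y)) ->
  (forall Y Z, T (Y + Z) = T Y + T Z) -> (forall c Y, T (c *: Y) = c *: T Y) ->
  forall (r : seq I) (v : I -> 'M[C]_N), (forall i, T (v i) = mu i *: v i) ->
  uniq r -> {in r &, injective mu} -> P (\sum_(i <- r) v i) ->
  forall i, i \in r -> P (v i).
Proof.
move=> P0 Plin PT Tadd TZ.
have PD Y Z : P Y -> P Z -> P (Y + Z) by move=> *; rewrite -[Y]scale1r; apply: (Plin).
have T0 : T 0 = 0 by have := TZ 0 0; rewrite !scale0r.
have Tsum (r : seq I) (w : I -> 'M[C]_N) : T (\sum_(i <- r) w i) = \sum_(i <- r) T (w i).
  by apply: (big_morph T Tadd T0).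
elim=> [//|i0 r IH] v Tv /= /andP[i0r ur] inj Psum.
set v' := fun i => (mu i - mu i0) *: v i.
have Tv' i : T (v' i) = mu i *: v' i by rewrite /v' TZ Tv !scalerA mulrC.
have Psum' : P (\sum_(i <- r) v' i).
  have -> : \sum_(i <- r) v' i = T (\sum_(i <- i0 :: r) v i) + (- mu i0) *: \sum_(i <- i0 :: r) v i.
    rewrite Tsum !big_cons Tv scalerDr addrACA !scaleNr subrr add0r scaler_sumr -sumrN -big_split /=.
    by apply: eq_bigr => i _; rewrite Tv /v' scalerBl.
  by rewrite addrC; apply: (Plin) => //; apply: PT.
have inj' : {in r &, injective mu}.
  by move=> x y xr yr; apply: inj; rewrite inE ?xr ?yr orbT.
have Pr i : i \in r -> P (v i).
  move=> ir; have ne : mu i - mu i0 != 0.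
    rewrite subr_eq0; apply/eqP=> e; move: i0r; rewrite -(inj i i0) ?ir //.
      by rewrite inE ir orbT.
    by rewrite inE eqxx.
  have -> : v i = (mu i - mu i0)^-1 *: v' i + 0 by rewrite addr0 /v' scalerA mulVf // scale1r.
  by apply: (Plin) => //; apply: IH.
move=> i; rewrite inE => /orP[/eqP->|]; last exact: Pr.
have -> : v i0 = 1 *: \sum_(i <- i0 :: r) v i + (-1) *: \sum_(i <- r) v i.
  by rewrite big_cons scale1r scaleN1r addrK.
apply: (Plin) => //; rewrite -[X in P X]addr0; apply: (Plin) => //.
rewrite big_seq; apply: (big_ind P) => //; exact: PD.
Qed.

Lemma diag_T (C : numClosedFieldType) (N : nat) (lam : 'I_N -> C) (Y : 'M[C]_N) :
  diag_mx (\row_i lam i) *m Y - Y *m diag_mx (\row_i lam i) =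
  \matrix_(a, b) ((lam a - lam b) * Y a b).
Proof.
by apply/matrixP=> a b; rewrite mul_diag_mx mul_mx_diag !mxE mulrBl [Y a b * _]mulrC.
Qed.

Lemma T_delta (C : numClosedFieldType) (N : nat) (lam : 'I_N -> C) (j m : 'I_N) :
  diag_mx (\row_i lam i) *m delta_mx j m - delta_mx j m *m diag_mx (\row_i lam i) =
  (lam j - lam m) *: (delta_mx j m : 'M[C]_N).
Proof.
rewrite diag_T; apply/matrixP=> a b; rewrite !mxE.
by case: eqP => [->|_]; case: eqP => [->|_]; rewrite ?mulr0 ?mulr1.
Qed.

Lemma herm_diag (C : numClosedFieldType) (N : nat) (lam : 'I_N -> C) :
  (forall j, lam j \is Num.real) -> hermitianOp (diag_mx (\row_i lam i)).
Proof.
move=> rl a b; rewrite !mxE rmorphMn /= conj_Creal // eq_sym.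
by case: eqP => [->|]; rewrite ?mulr1n ?mulr0n.
Qed.

Lemma bracket_lin (C : numClosedFieldType) (N : nat) (D Y Z : 'M[C]_N) c :
  bracket D (Y + c *: Z) = bracket D Y + c *: bracket D Z.
Proof.
rewrite /bracket mulmxDr mulmxDl -scalemxAr -scalemxAl scalerA mulrC -scalerA.
by rewrite -scalerDr; congr (_ *: _); rewrite scalerBr opprD addrACA.
Qed.

Lemma core_F (C : numClosedFieldType) (N : nat) (A : 'M[C]_N) (lam : 'I_N -> C) :
  hermitianOp A -> (forall j m, j != m -> A j m != 0) ->
  (forall j, lam j \is Num.real) ->
  (forall k l k' l', k != l -> k' != l' -> (k, l) != (k', l') ->
     lam k - lam l != lam k' - lam l') ->
  forall (j m : 'I_N) (z : C), j != m ->
  lie_closure A (diag_mx (\row_i lam i)) (z *: delta_mx j m + z^* *: delta_mx m j).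
Proof.
move=> hA nzA rl gap.
set D := diag_mx _.
have hD : hermitianOp D by apply: herm_diag.
pose L := lie_closure A D.
pose PC Y := exists Y1 Y2, L Y1 /\ L Y2 /\ Y = Y1 + 'i *: Y2.
have PC_L Y : L Y -> PC Y.
  by move=> h; exists Y, 0; split=> //; split; [apply: lc0 | rewrite scaler0 addr0].
have PC0 : PC 0 by apply: (PC_L); apply: lc0.
have PCD Y Z : PC Y -> PC Z -> PC (Y + Z).
  move=> [Y1 [Y2 [l1 [l2 ->]]]] [Z1 [Z2 [m1 [m2 ->]]]].
  exists (Y1 + Z1), (Y2 + Z2); split; first exact: lcD.
  by split; [exact: lcD | rewrite scalerDr addrACA].
have PCr a Y : a \is Num.real -> PC Y -> PC (a *: Y).
  move=> ra [Y1 [Y2 [l1 [l2 ->]]]].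
  exists (a *: Y1), (a *: Y2); split; first exact: lcZ.
  by split; [exact: lcZ | rewrite scalerDr !scalerA mulrC].
have PCi Y : PC Y -> PC ('i *: Y).
  move=> [Y1 [Y2 [l1 [l2 ->]]]].
  exists (- Y2), Y1; split; first exact: lcN.
  by split=> //; rewrite scalerDr scalerA mulCii scaleN1r addrC.
have PCZ c Y : PC Y -> PC (c *: Y).
  move=> h; rewrite [c]Crect scalerDl mulrC -scalerA.
  apply: (PCD); apply: (PCr); rewrite ?Creal_Re ?Creal_Im //; exact: (PCi).
have PClin c Y Z : PC Y -> PC Z -> PC (c *: Y + Z).
  by move=> hY hZ; apply: (PCD) => //; apply: (PCZ).
have PC_herm Y : PC Y -> hermitianOp Y -> L Y.
  move=> [Y1 [Y2 [l1 [l2 ->]]]] h.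
  have h1 := (lc_herm hA hD l1).1; have h2 := (lc_herm hA hD l2).1.
  suff -> : Y2 = 0 by rewrite scaler0 addr0.
  apply/matrixP=> a b; move/hermE: h; rewrite ctD ctZ (proj1 (hermE _) h1).
  rewrite (proj1 (hermE _) h2) conjCi => /matrixP/(_ a b); rewrite !mxE mulNr.
  move/addrI/eqP; rewrite eqNr mulf_eq0 (negbTE (@neq0Ci C)) /= => /eqP->.
  done.
have PCT Y : PC Y -> PC (D *m Y - Y *m D).
  move=> [Y1 [Y2 [l1 [l2 ->]]]].
  have -> : forall W, D *m W - W *m D = (- 'i) *: bracket D W.
    by move=> W; rewrite /bracket scalerA mulNr mulCii opprK scale1r.
  rewrite bracket_lin; apply: (PCZ); apply: (PCD); first by apply: (PC_L); apply: lcB => //; apply: lcH2.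
  by apply: (PCZ); apply: (PC_L); apply: lcB => //; apply: lcH2.
pose T Y := D *m Y - Y *m D.
pose mu (p : 'I_N * 'I_N) := lam p.1 - lam p.2.
pose r := enum [pred p : 'I_N * 'I_N | p.1 != p.2].
pose v (p : 'I_N * 'I_N) := (A p.1 p.2 * mu p) *: (delta_mx p.1 p.2 : 'M[C]_N).
have Psum : PC (\sum_(p <- r) v p).
  suff -> : \sum_(p <- r) v p = T A by apply: (PCT); apply: (PC_L); apply: lcH1.
  rewrite big_enum /T diag_T; apply/matrixP=> a b; rewrite summxE mxE.
  have [eab|nab] := eqVneq a b.
    rewrite eab subrr mul0r big1 // => [[k l]]; rewrite inE /= => kl.
    rewrite !mxE /=.
    suff /negbTE -> : ~~ ((b == k) && (b == l)) by rewrite mulr0.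
    by apply: contraNN kl => /andP[/eqP<- /eqP<-].
  rewrite (bigD1 (a, b)) /=; last by rewrite inE.
  rewrite big1 ?addr0; first by rewrite !mxE !eqxx mulr1 /mu /= mulrC.
  move=> [k l] /andP[_ ne]; rewrite !mxE.
  move: ne; rewrite xpair_eqE (eq_sym k) (eq_sym l) => /negbTE ->.
  by rewrite mulr0.
have split := @eigen_split C N _ PC T mu PC0 PClin PCT.
have Pv : forall p, p \in r -> PC (v p).
  apply: (split _ _ r v) => //.
  - by move=> Y Z; rewrite /T mulmxDr mulmxDl opprD addrACA.
  - by move=> c Y; rewrite /T -scalemxAr -scalemxAl scalerBr.
  - by move=> p; rewrite /T /v -scalemxAr -scalemxAl -scalerBr T_delta !scalerA mulrC.
  - exact: enum_uniq.
  move=> [k l] [k' l']; rewrite !mem_enum !inE /= => kl k'l' e.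
  apply/eqP; apply/negPn/negP => ne; move: (gap _ _ _ _ kl k'l' ne).
  by rewrite /mu /= in e; rewrite e eqxx.
have PCd j m z : j != m -> PC (z *: (delta_mx j m : 'M[C]_N)).
  move=> jm; have := Pv (j, m); rewrite mem_enum inE => /(_ jm) h.
  have nz : A j m * mu (j, m) != 0.
    rewrite mulf_neq0 ?nzA // /mu /= subr_eq0; apply/eqP=> e.
    have mj : m != j by rewrite eq_sym.
    have ne : (j, m) != (m, j) by rewrite xpair_eqE (negbTE jm).
    by move: (gap _ _ _ _ jm mj ne); rewrite e subrr eqxx.
  have -> : z *: (delta_mx j m : 'M[C]_N) = (z / (A j m * mu (j, m))) *: v (j, m).
    by rewrite /v scalerA divfK.
  exact: (PCZ).
move=> j m z jm; apply: (PC_herm).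
  by apply: (PCD); apply: (PCd) => //; rewrite eq_sym.
by apply/hermE; rewrite ctD !ctZ !ctdelta conjCK addrC.
Qed.

Lemma bracket_F (C : numClosedFieldType) (N : nat) (j m : 'I_N) : j != m ->
  bracket (1 *: delta_mx j m + 1^* *: delta_mx m j)
          ('i *: delta_mx j m + 'i^* *: delta_mx m j) =
  2 *: (delta_mx j j - delta_mx m m : 'M[C]_N).
Proof.
move=> jm; have mj : m != j by rewrite eq_sym.
rewrite /bracket conjC1 conjCi !scale1r !mulmxDl !mulmxDr -!scalemxAr -!scalemxAl.
rewrite !mul_delta_mx_cond !eqxx (negbTE jm) (negbTE mj) !mulr0n !mulr1n.
apply/matrixP=> a b; rewrite !mxE.
set x := ((a == j) && (b == j))%:R; set y := ((a == m) && (b == m))%:R.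
transitivity (('i * 'i) * (2 * (y - x))); first ring.
by rewrite mulCii; ring.
Qed.

Lemma sum_ind (C : numClosedFieldType) (N : nat) (f : 'I_N -> C) a :
  \sum_m (a == m)%:R * f m = f a.
Proof.
rewrite (bigD1 a) //= eqxx mul1r big1 ?addr0 // => m ma.
by rewrite eq_sym (negbTE ma) mul0r.
Qed.

Lemma sum2A (C : numClosedFieldType) (N : nat) (f : 'I_N -> 'I_N -> C) a b :
  \sum_j \sum_m f j m * ((a == j) && (b == m))%:R = f a b.
Proof.
rewrite (bigD1 a) //= [X in _ + X]big1 => [|j ja]; last first.
  by apply: big1 => m _; rewrite (eq_sym a) (negbTE ja) mulr0.
rewrite addr0 (bigD1 b) //= [X in _ + X]big1 => [|m mb]; last first.
  by rewrite (eq_sym b) (negbTE mb) andbF mulr0.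
by rewrite !eqxx mulr1 addr0.
Qed.

Lemma sum2B (C : numClosedFieldType) (N : nat) (f : 'I_N -> 'I_N -> C) a b :
  \sum_j \sum_m f j m * ((a == m) && (b == j))%:R = f b a.
Proof. by rewrite exchange_big; exact: (sum2A (fun m j => f j m) a b). Qed.

Lemma core_diag (C : numClosedFieldType) (N : nat) (A : 'M[C]_N) (lam : 'I_N -> C) :
  hermitianOp A -> (forall j m, j != m -> A j m != 0) ->
  (forall j, lam j \is Num.real) ->
  (forall k l k' l', k != l -> k' != l' -> (k, l) != (k', l') ->
     lam k - lam l != lam k' - lam l') ->
  forall (j m : 'I_N),
  lie_closure A (diag_mx (\row_i lam i)) (delta_mx j j - delta_mx m m).
Proof.
move=> hA nzA rl gap j m.
have [->|jm] := eqVneq j m; first by rewrite subrr; apply: lc0.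
have := lcB (core_F hA nzA rl gap 1 jm) (core_F hA nzA rl gap 'i jm).
rewrite bracket_F // => h.
rewrite -[_ - _]scale1r -(@mulVf _ 2) ?pnatr_eq0 // -scalerA.
by apply: lcZ => //; rewrite rpredV rpred_nat.
Qed.

Lemma core_dec (C : numClosedFieldType) (N : nat) (A : 'M[C]_N) (lam : 'I_N -> C) :
  hermitianOp A -> (forall j m, j != m -> A j m != 0) ->
  (forall j, lam j \is Num.real) ->
  (forall k l k' l', k != l -> k' != l' -> (k, l) != (k', l') ->
     lam k - lam l != lam k' - lam l') ->
  forall (i0 : 'I_N) (X : 'M[C]_N), hermitianOp X ->
  lie_closure A (diag_mx (\row_i lam i)) (X - \tr X *: delta_mx i0 i0).
Proof.
move=> hA nzA rl gap i0 X hX.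
pose F j m : 'M[C]_N := X j m *: delta_mx j m + (X j m)^* *: delta_mx m j.
pose G j m := F j m - ((j == m)%:R * (X j m + (X j m)^*)) *: (delta_mx i0 i0 : 'M[C]_N).
have LG j m : lie_closure A (diag_mx (\row_i lam i)) (G j m).
  rewrite /G /F; have [<-|jm] := eqVneq j m.
    rewrite mul1r -scalerDl -scalerBr; apply: lcZ; last exact: core_diag.
    by rewrite CrealE rmorphD /= conjCK addrC.
  by rewrite mul0r scale0r subr0; apply: core_F.
have SF : \sum_j \sum_m F j m = X + X.
  apply/matrixP=> a b; rewrite summxE.
  under eq_bigr => j _ do rewrite summxE.
  under eq_bigr => j _ do under eq_bigr => m _ do rewrite !mxE.
  under eq_bigr => j _ do rewrite big_split.
  by rewrite big_split /= sum2A sum2B mxE -hX.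
have SC : \sum_j \sum_m ((j == m)%:R * (X j m + (X j m)^*)) = \tr X + \tr X.
  under eq_bigr => j _ do rewrite sum_ind -hX.
  by rewrite big_split.
have e : X - \tr X *: delta_mx i0 i0 = 2^-1 *: \sum_j \sum_m G j m.
  rewrite /G.
  under eq_bigr => j _ do rewrite sumrB.
  rewrite sumrB SF.
  under eq_bigr => j _ do rewrite -scaler_suml.
  rewrite -scaler_suml SC scalerDl opprD addrACA -mulr2n -scaler_nat scalerA.
  by rewrite mulVf ?pnatr_eq0 // scale1r.
rewrite e; apply: lcZ; first by rewrite rpredV rpred_nat.
by apply: lc_sum => j _; apply: lc_sum => m _; apply: LG.
Qed.

Lemma tr_real (C : numClosedFieldType) (N : nat) (M : 'M[C]_N) :
  hermitianOp M -> \tr M \is Num.real.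
Proof. by move=> hM; apply: rpred_sum => i _; rewrite CrealE -hM. Qed.

Lemma core2 (C : numClosedFieldType) (N : nat) (A : 'M[C]_N) (lam : 'I_N -> C) (i0 : 'I_N) :
  hermitianOp A -> (forall j m, j != m -> A j m != 0) ->
  (forall j, lam j \is Num.real) ->
  (forall k l k' l', k != l -> k' != l' -> (k, l) != (k', l') ->
     lam k - lam l != lam k' - lam l') ->
  (forall X, hermitianOp X -> \tr X = 0 -> lie_closure A (diag_mx (\row_i lam i)) X) /\
  (\tr A != 0 \/ \tr (diag_mx (\row_i lam i)) != 0 ->
     forall X, hermitianOp X -> lie_closure A (diag_mx (\row_i lam i)) X).
Proof.
move=> hA nzA rl gap.
have dec := core_dec hA nzA rl gap i0.
split=> [X hX tX|ntr]; first by have := dec X hX; rewrite tX scale0r subr0.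
have Ld : lie_closure A (diag_mx (\row_i lam i)) (delta_mx i0 i0).
  have [M [LM [hM tM]]] : exists M, lie_closure A (diag_mx (\row_i lam i)) M /\
      hermitianOp M /\ \tr M != 0.
    case: ntr => h.
      by exists A; split; [apply: lcH1 | split].
    exists (diag_mx (\row_i lam i)); split; first by apply: lcH2.
    by split=> //; apply: herm_diag.
  have := lcSub LM (dec M hM); rewrite opprB addrC subrK => h.
  rewrite -[delta_mx _ _]scale1r -(mulVf tM) -scalerA; apply: lcZ => //.
  by rewrite rpredV tr_real.
move=> X hX; have := lcD (dec X hX) (lcZ (tr_real hX) Ld).
by rewrite subrK.
Qed.

Unset Implicit Arguments.
Theorem mainTheorem5 (C : numClosedFieldType) (N : nat) (H1 H2 : 'M[C]_N)
  (lambda : 'I_N -> C) (psi : 'I_N -> 'cV[C]_N) :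
  (1 < N)%N ->
  hermitianOp H1 -> hermitianOp H2 ->
  (forall k j, inner (psi k) (psi j) = (k == j)%:R) ->
  (forall k, H2 *m psi k = lambda k *: psi k) ->
  (forall k j, k != j -> inner (H1 *m psi k) (psi j) != 0) ->
  (forall k l k' l', k != l -> k' != l' -> (k, l) != (k', l') ->
     lambda k - lambda l != lambda k' - lambda l') ->
  ((\tr H1 = 0 /\ \tr H2 = 0) ->
     forall X : 'M[C]_N, lie_closure H1 H2 X <-> (hermitianOp X /\ \tr X = 0)) /\
  (~ (\tr H1 = 0 /\ \tr H2 = 0) ->
     forall X : 'M[C]_N, lie_closure H1 H2 X <-> hermitianOp X).
Proof.
move=> N1 h1 h2 orth eig nz gap.
pose i0 : 'I_N := Ordinal (ltnW N1).
pose U : 'M[C]_N := \matrix_(i, k) psi k i ord0.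
pose Us := ct U.
have UsU : Us *m U = 1%:M.
  apply/matrixP=> j k; rewrite !mxE eq_sym -orth /inner.
  by apply: eq_bigr => m _; rewrite /Us ctE !mxE mulrC.
have UUs : U *m Us = 1%:M by apply: mulmx1C.
pose Phi X := Us *m X *m U.
pose Psi X := U *m X *m Us.
have PsiPhi X : Psi (Phi X) = X.
  by rewrite /Psi /Phi !mulmxA UUs mul1mx -mulmxA UUs mulmx1.
have hPhi X : hermitianOp X -> hermitianOp (Phi X).
  move=> /hermE hX; apply/hermE; rewrite /Phi !ctM hX /Us ctK mulmxA //.
have tPhi X : \tr (Phi X) = \tr X.
  by rewrite /Phi mxtrace_mulC mulmxA UUs mul1mx.
have HU : H2 *m U = U *m diag_mx (\row_k lambda k).
  apply/matrixP=> i k; rewrite mul_mx_diag !mxE.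
  have := congr1 (fun M : 'cV[C]_N => M i ord0) (eig k); rewrite !mxE mulrC => <-.
  by apply: eq_bigr => m _; rewrite !mxE.
have eD : Phi H2 = diag_mx (\row_k lambda k).
  by rewrite /Phi -mulmxA HU mulmxA UsU mul1mx.
have rl : forall j, lambda j \is Num.real.
  move=> j; have := hPhi _ h2 j j; rewrite eD !mxE eqxx mulr1n => e.
  by rewrite CrealE -e.
have nzA : forall j m, j != m -> Phi H1 j m != 0.
  move=> j m jm; have := nz m j; rewrite eq_sym => /(_ jm).
  apply: contraNN => /eqP e; apply/eqP; rewrite -e /inner /Phi -mulmxA mxE.
  apply: eq_bigr => a _; rewrite !mxE mulrC; congr (_ * _).
  by apply: eq_bigr => b _; rewrite !mxE.
have [c1 c2] := core2 i0 (hPhi _ h1) nzA rl gap.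
rewrite -eD in c1 c2.
have [P0 Plin Pbr] := cmap_props UsU.
have back X : lie_closure (Phi H1) (Phi H2) (Phi X) -> lie_closure H1 H2 X.
  move=> h; rewrite -(PsiPhi X) -(PsiPhi H1) -(PsiPhi H2).
  by apply: lc_map => // a Y Z _; apply: Plin.
split.
  move=> [t1 t2] X; split.
    by move=> h; have [hX tX] := lc_herm h1 h2 h; split=> //; apply: tX.
  move=> [hX tX]; apply: back; apply: c1; [exact: hPhi | by rewrite tPhi].
move=> ntr X; split; first by move=> h; exact: (lc_herm h1 h2 h).1.
move=> hX; apply: back; apply: c2; last exact: hPhi.
rewrite !tPhi; case: (eqVneq (\tr H1) 0) => [e1|]; last by left.
case: (eqVneq (\tr H2) 0) => [e2|]; last by right.
by case: ntr.
Qed.
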